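(* Let $r_I>r_0>0$, $v_1,v_2>0$, $w_V>0$ and $w_I$ be real numbers with $0<w_I\le \frac{r_0 w_V v_2}{r_I(v_1+v_2)}$. Let $n\ge 1$ be an integer and $l_1,\dots,l_{n-1}\ge 0$ be real numbers. Consider the optimization problem (P) described in the context. Then the optimal value of (P) is $$\left(\sum_{i=1}^{n}Y_i\right)^*=\frac{\sum_{i=1}^{n-1}\min\{l_i,2r_I\}+2r_I}{v_2}\,w_I .$$ Moreover, this optimal value is attained by the feasible point $$Y_i^*=D_i^*=\frac{\min\{l_i,2r_I\}}{v_2}w_I\ (i=1,\dots,n-1),\qquad Y_n^*=D_n^*=\frac{2r_I}{v_2}w_I .$$
   Context: Model: a vehicle of interest (VoI) moving at speed $v_1$ receives data from $n$ ''helper'' vehicles moving in the opposite direction at speed $v_2$; consecutive helpers are at distances $l_1,\dots,l_{n-1}$; helpers download from an infrastructure point of radio range $r_I$ at rate $w_I$, and deliver to the VoI over vehicle links of range $r_0$ at rate $w_V$. $D_i$ is the amount of data helper $i$ receives from the infrastructure and $Y_i$ the amount it delivers to the VoI. The optimization problem (P), over real variables $D_1,\dots,D_n,Y_1,\dots,Y_n$, is: maximize $\sum_{i=1}^n Y_i$ subject to (i) $0\le D_i\le \frac{2r_I}{v_2}w_I$ for $i=1,\dots,n$; (ii) $\sum_{i=k_1}^{k_2}D_i\le \frac{\sum_{i=k_1}^{k_2-1}\min\{l_i,2r_I\}+2r_I}{v_2}w_I$ for all $1\le k_1\le k_2\le n$; (iii) $0\le Y_i\le \frac{2r_0}{v_1+v_2}w_V$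 for $i=1,\dots,n$; (iv) $Y_i\le D_i$ for $i=1,\dots,n$; (v) $\sum_{i=k_1}^{k_2}Y_i\le \frac{\sum_{i=k_1}^{k_2-1}\min\{l_i,2r_0\}+2r_0}{v_1+v_2}w_V$ for all $1\le k_1\le k_2\le n$. (Empty sums are zero.) *)

(* Defs.v *)
From mathcomp Require Import all_boot all_order all_algebra.
Set Implicit Arguments. Unset Strict Implicit. Unset Printing Implicit Defensive.
Import Order.TTheory GRing.Theory Num.Theory.
Local Open Scope ring_scope.

(* Helpers are indexed 1..n (1-based, as in the paper); D, Y : nat -> R,
   and the gaps l are indexed 1..n-1.  Values outside these ranges are irrelevant. *)

Definition window_cap (R : realFieldType) (l : nat -> R) (r v w : R) (k1 k2 : nat) : R :=
  (\sum_(k1 <= i < k2) Num.min (l i) (2 * r) + 2 * r) / v * w.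

Definition feasibleP (R : realFieldType) (n : nat) (l : nat -> R)
    (rI r0 v1 v2 wI wV : R) (D Y : nat -> R) : Prop :=
  [/\ (forall i, (1 <= i <= n)%N -> 0 <= D i <= 2 * rI / v2 * wI),
      (forall k1 k2, (1 <= k1)%N -> (k1 <= k2)%N -> (k2 <= n)%N ->
          \sum_(k1 <= i < k2.+1) D i <= window_cap l rI v2 wI k1 k2),
      (forall i, (1 <= i <= n)%N -> 0 <= Y i <= 2 * r0 / (v1 + v2) * wV),
      (forall i, (1 <= i <= n)%N -> Y i <= D i) &
      (forall k1 k2, (1 <= k1)%N -> (k1 <= k2)%N -> (k2 <= n)%N ->
          \sum_(k1 <= i < k2.+1) Y i <= window_cap l r0 (v1 + v2) wV k1 k2)].

Definition objP (R : realFieldType) (n : nat) (Y : nat -> R) : R :=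
  \sum_(1 <= i < n.+1) Y i.

Definition Ystar (R : realFieldType) (n : nat) (l : nat -> R) (rI v2 wI : R) (i : nat) : R :=
  if (i < n)%N then Num.min (l i) (2 * rI) / v2 * wI else 2 * rI / v2 * wI.

(* Main.v *)
Require Import Defs.
From mathcomp Require Import all_boot all_order all_algebra.
From mathcomp Require Import ring lra zify.
Import Order.TTheory GRing.Theory Num.Theory.
Local Open Scope ring_scope.

Lemma wc_split (R : realFieldType) (l : nat -> R) r v w k1 k2 :
  window_cap l r v w k1 k2 =
  \sum_(k1 <= i < k2) (Num.min (l i) (2 * r) * (w / v)) + 2 * r * (w / v).
Proof. by rewrite /window_cap -mulrA (mulrC v^-1) mulrDl big_distrl. Qed.

Lemma win_bound (R : realFieldType) (n : nat) (Y g : nat -> R) (B : R) k1 k2 :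
  (1 <= k1)%N -> (k1 <= k2)%N -> (k2 <= n)%N ->
  (forall i, (1 <= i)%N -> (i < n)%N -> Y i <= g i) ->
  (forall i, (1 <= i)%N -> (i <= n)%N -> Y i <= B) ->
  \sum_(k1 <= i < k2.+1) Y i <= \sum_(k1 <= i < k2) g i + B.
Proof.
move=> h1 h2 h3 Hg HB; rewrite big_nat_recr //=; apply: lerD.
  apply: ler_sum_nat => i /andP[a b]; apply: Hg; lia.
apply: HB; lia.
Qed.

Theorem theorem1 (R : realFieldType) (rI r0 v1 v2 wV wI : R) (n : nat) (l : nat -> R) :
  0 < r0 -> r0 < rI -> 0 < v1 -> 0 < v2 -> 0 < wV ->
  0 < wI -> wI <= r0 * wV * v2 / (rI * (v1 + v2)) ->
  (1 <= n)%N ->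
  (forall i, (1 <= i <= n.-1)%N -> 0 <= l i) ->
  let V := (\sum_(1 <= i < n) Num.min (l i) (2 * rI) + 2 * rI) / v2 * wI in
  feasibleP n l rI r0 v1 v2 wI wV (Ystar n l rI v2 wI) (Ystar n l rI v2 wI) /\
  objP n (Ystar n l rI v2 wI) = V /\
  (forall D Y : nat -> R, feasibleP n l rI r0 v1 v2 wI wV D Y -> objP n Y <= V).
Proof.
move=> r0p r0rI v1p v2p wVp wIp hw n1 lpos V.
have VE : V = window_cap l rI v2 wI 1 n by [].
set c := wI / v2.
set a := wV / (v1 + v2).
have cp : 0 < c by rewrite divr_gt0.
have ap : 0 < a by rewrite divr_gt0 // addr_gt0.
have hca : c * rI <= r0 * a.
  have -> : r0 * a = (r0 * wV * v2 / (rI * (v1 + v2))) / v2 * rI.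
    rewrite /a; field.
    by rewrite (gt_eqF v2p) (gt_eqF (addr_gt0 v1p v2p)) (gt_eqF (lt_trans r0p r0rI)).
  by rewrite ler_pM2r ?ler_pM2r ?invr_gt0 //; lra.
have YE i : Ystar n l rI v2 wI i =
    (if (i < n)%N then Num.min (l i) (2 * rI) else 2 * rI) * c.
  by rewrite /Ystar /c; case: ifP => _; rewrite -mulrA (mulrC v2^-1).
have minp i : (1 <= i)%N -> (i < n)%N ->
    0 <= Num.min (l i) (2 * rI) <= 2 * rI.
  move=> h1 h2; have := lpos i; rewrite h1 /= => /(_ _).
  move=> H; have {}H := H ltac:(lia).
  rewrite ge_min lexx orbT andbT le_min H /=; lra.
have Ybd i : (1 <= i)%N -> (i <= n)%N ->
    0 <= Ystar n l rI v2 wI i <= 2 * rI * c.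
  move=> h1 h2; rewrite YE; case: ifP => hi.
    have /andP[m1 m2] := minp i h1 hi; apply/andP; split; nra.
  apply/andP; split; nra.
have Ytop i : (1 <= i)%N -> (i <= n)%N ->
    Ystar n l rI v2 wI i <= 2 * r0 * a.
  move=> h1 h2; have /andP[_ H] := Ybd i h1 h2; nra.
have Ymid i : (1 <= i)%N -> (i < n)%N ->
    Ystar n l rI v2 wI i <= Num.min (l i) (2 * r0) * a.
  move=> h1 h2; rewrite YE h2.
  have /andP[m1 m2] := minp i h1 h2.
  have H := lpos i ltac:(lia).
  set x := Num.min (l i) (2 * rI) in m1 m2 *.
  have hx : x <= l i by rewrite /x ge_min lexx.
  have key : x * r0 <= Num.min (l i) (2 * r0) * rI.
    case: (leP (l i) (2 * r0)) => hl.
      have hy : l i <= Num.min (l i) (2 * r0) by rewrite le_min lexx hl.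
      nra.
    have hy : 2 * r0 <= Num.min (l i) (2 * r0) by rewrite le_min lexx (ltW hl).
    nra.
  have : x * c * rI <= Num.min (l i) (2 * r0) * a * rI by nra.
  rewrite ler_pM2r; first by []. lra.
split; first split.
- move=> i /andP[h1 h2]; have := Ybd i h1 h2.
  by rewrite /c -!mulrA (mulrC wI).
- move=> k1 k2 h1 h2 h3; rewrite wc_split -/c.
  apply: win_bound h1 h2 h3 _ _.
    by move=> i a1 a2; rewrite YE a2.
  by move=> i a1 a2; have /andP[] := Ybd i a1 a2.
- move=> i /andP[h1 h2]; have /andP[-> _] := Ybd i h1 h2.
  by have := Ytop i h1 h2; rewrite /a -!mulrA (mulrC wV).
- by [].
- move=> k1 k2 h1 h2 h3; rewrite wc_split -/a.
  by apply: win_bound h1 h2 h3 _ _.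
split.
- rewrite /objP VE wc_split -/c big_nat_recr //= YE ltnn.
  congr (_ + _); apply: eq_big_nat => i /andP[_ hi]; by rewrite YE hi.
move=> D Y [_ hD _ hYD _]; rewrite /objP VE.
apply: le_trans (hD 1%N n _ n1 _) => //.
by apply: ler_sum_nat => i /andP[a1 a2]; apply: hYD; apply/andP; split; lia.
Qed.
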